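(* For every hypothesis class $\mathcal{H} \subseteq \{0,1\}^{\mathcal{X}}$ and every time horizon $T \in \mathbb{N}$, $$\frac{1}{8}\min\Bigl\{\max\Bigl\{\sqrt{(\operatorname{W}(\mathcal{H})-1)\,T},\ \operatorname{L}(\mathcal{H})\Bigr\},\ T\Bigr\} \;\le\; \inf_{\mathcal{A}} \operatorname{M}_{\mathcal{A}}(T,\mathcal{H}) \;\le\; \operatorname{AL}_{\operatorname{W}(\mathcal{H})}(\mathcal{H}) + 2\sqrt{(\operatorname{W}(\mathcal{H})-1)\,T},$$ where the infimum is over all (possibly randomized) online learners operating under apple tasting feedback.
   Context: Online binary classification: over rounds $t=1,\dots,T$, an adversary picks $(x_t,y_t)\in\mathcal{X}\times\{0,1\}$ and reveals $x_t$; the learner $\mathcal{A}$ (possibly randomized) outputs a prediction $\hat y_t=\mathcal{A}(x_t)\in\{0,1\}$ based on the history; under apple tasting feedback the learner observes $y_t$ only if $\hat y_t=1$. In the realizable setting, $\operatorname{M}_{\mathcal{A}}(T,\mathcal{H}) := \sup_{h\in\mathcal{H}}\sup_{x_1,\dots,x_T}\mathbb{E}\bigl[\sum_{t=1}^T \mathbb{1}\{\mathcal{A}(x_t)\neq h(x_t)\}\bigr]$ with $y_t=h(x_t)$, the expectation being over the learner's randomness. Apple Littlestone (AL) tree of width $w\in\mathbb{N}=\{1,2,\dots\}$ and depth $d$: call a binary string $u$ an internal node if $|u|<d$ and $u$ contains fewer than $w$ ones; the tree assigns an instance $x_u\in\mathcal{X}$ to every internal node. A path is a binary string $\sigma$ all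 of whose proper prefixes are internal nodes but which is not itself an internal node (so either $|\sigma|=d$ or $\sigma$ contains exactly $w$ ones). The tree is shattered by $\mathcal{H}$ if for every path $\sigma$ there is $h\in\mathcal{H}$ with $h(x_{(\sigma_1,\dots,\sigma_{i-1})})=\sigma_i$ for all $i\le|\sigma|$. (When $w\ge d$ this is a complete binary tree of depth $d$, i.e. a Littlestone tree.) The Littlestone dimension $\operatorname{L}(\mathcal{H})$ is the largest $d$ such that a complete binary (Littlestone) tree of depth $d$ is shattered by $\mathcal{H}$ ($\infty$ if arbitrarily large depths are shattered). The Apple Littlestone dimension $\operatorname{AL}_w(\mathcal{H})$ is the largest $d$ such that an AL tree of width $w$ and depth $d$ is shattered by $\mathcal{H}$; it is $\infty$ if arbitrarily large depths occur and $0$ if there is no shattered AL tree of width $w$. The Effective width $\operatorname{W}(\mathcal{H})$ is the smallest $w\in\mathbb{N}$ with $\operatorname{AL}_w(\mathcal{H})<\infty$, and $\infty$ if none exists. *)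

(* Defs.v *)
From HB Require Import structures.
From mathcomp Require Import all_boot all_order all_algebra.
From mathcomp Require Import boolp classical_sets reals constructive_ereal ereal.
Set Implicit Arguments. Unset Strict Implicit. Unset Printing Implicit Defensive.
Import Order.TTheory GRing.Theory Num.Theory.
Local Open Scope ring_scope.
Local Open Scope classical_set_scope.

(* A tree is a partial labelling of binary strings (nodes) by instances;
   it must label every internal node.  [internal] selects the internal nodes. *)
Definition tree (X : Type) := bitseq -> option X.

Definition tree_wf (X : Type) (internal : pred bitseq) (t : tree X) : Prop :=
  forall u : bitseq, internal u -> t u <> None.

Definition is_path (internal : pred bitseq) (s : bitseq) : Prop :=
  (forall i, (i < size s)%N -> internal (take i s)) /\ ~~ internal s.

Definition shattered (X : Type) (H : set (X -> bool)) (internal : pred bitseq)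
    (t : tree X) : Prop :=
  forall s, is_path internal s ->
    exists h, H h /\
      forall i, (i < size s)%N -> omap h (t (take i s)) = Some (nth false s i).

Definition al_internal (w d : nat) : pred bitseq :=
  fun u => (size u < d)%N && (count id u < w)%N.

Definition lit_internal (d : nat) : pred bitseq := fun u => (size u < d)%N.

Definition AL_shatterable (X : Type) (H : set (X -> bool)) (w d : nat) : Prop :=
  exists t : tree X, tree_wf (al_internal w d) t /\ shattered H (al_internal w d) t.

Definition L_shatterable (X : Type) (H : set (X -> bool)) (d : nat) : Prop :=
  exists t : tree X, tree_wf (lit_internal d) t /\ shattered H (lit_internal d) t.

Section Dims.
Variable R : realType.
Local Open Scope ereal_scope.

(* largest shattered depth; +oo if unbounded; 0 if none is shattered *)
Definition ALdim (X : Type) (H : set (X -> bool)) (w : nat) : \bar R :=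
  ereal_sup ([set 0] `|` [set (d%:R)%:E | d in AL_shatterable H w]).

Definition Ldim (X : Type) (H : set (X -> bool)) : \bar R :=
  ereal_sup ([set 0] `|` [set (d%:R)%:E | d in L_shatterable H]).

(* effective width: smallest w >= 1 with ALdim finite; +oo if none *)
Definition effW (X : Type) (H : set (X -> bool)) : \bar R :=
  ereal_inf [set (w%:R)%:E | w in [set w : nat | (0 < w)%N /\ ALdim H w < +oo]].

End Dims.

(* What the learner has observed before a round: for each past round the
   instance x_s, its own prediction yhat_s, and the label y_s if yhat_s = 1
   (None otherwise). *)
Definition history (X : Type) := seq (X * bool * option bool).

(* A (possibly randomized) learner, as a behavioural strategy: given the
   history and the current instance, the probability of predicting 1. *)
Definition learner (R : realType) (X : Type) := history X -> X -> R.

Definition valid_learner (R : realType) (X : Type) (A : learner R X) : Prop :=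
  forall hs x, 0 <= A hs x <= 1.

Fixpoint exp_mistakes (R : realType) (X : Type) (A : learner R X)
    (h : X -> bool) (hs : history X) (xs : seq X) : R :=
  match xs with
  | [::] => 0
  | x :: xs' =>
      let p := A hs x in
      p * ((~~ h x)%:R + exp_mistakes A h (rcons hs (x, true, Some (h x))) xs')
      + (1 - p) * ((h x)%:R + exp_mistakes A h (rcons hs (x, false, None)) xs')
  end.

(* M_A(T, H): worst case over h in H and x_1..x_T (0 if H is empty) *)
Definition Mworst (R : realType) (X : Type) (A : learner R X) (T : nat)
    (H : set (X -> bool)) : \bar R :=
  ereal_sup ([set 0%E] `|`
    [set z | exists h xs, H h /\ size xs = T /\ z = (exp_mistakes A h [::] xs)%:E]).

Definition minimax (R : realType) (X : Type) (T : nat) (H : set (X -> bool)) : \bar R :=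
  ereal_inf [set Mworst A T H | A in [set A : learner R X | valid_learner A]].

(* Main.v *)
Require Import Defs.
From mathcomp Require Import all_boot all_order all_algebra.
From mathcomp Require Import boolp classical_sets reals constructive_ereal ereal.
From mathcomp Require Import zify ring lra.
Import Order.TTheory GRing.Theory Num.Theory.

Module Part1.
Set Implicit Arguments. Unset Strict Implicit. Unset Printing Implicit Defensive.
Import Order.TTheory GRing.Theory Num.Theory.
Local Open Scope classical_set_scope.

Section Trees.
Variable X : Type.
Implicit Types (H V : set (X -> bool)) (t : tree X).

Definition Realize t (s : bitseq) (h : X -> bool) :=
  forall i, (i < size s)%N -> omap h (t (take i s)) = Some (nth false s i).

Definition tsub t (b : bool) : tree X := fun u => t (b :: u).

Lemma Realize_cons t b s h :
  Realize t (b :: s) h <-> omap h (t [::]) = Some b /\ Realize (tsub t b) s h.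
Proof.
split.
  move=> R; split; first by have := R 0%N isT.
  by move=> i Hi; have := R i.+1 Hi.
move=> [R0 R] [|i] Hi //=; exact: R.
Qed.

Lemma al_internal_cons j N b u :
  al_internal j N.+1 (b :: u) = al_internal (j - b) N u.
Proof. by rewrite /al_internal /= ltnS ltn_subRL. Qed.

Lemma al_internal_nil j N : al_internal j N [::] = (0 < N)%N && (0 < j)%N.
Proof. by []. Qed.

Lemma is_path_cons j N b s :
  is_path (al_internal j N.+1) (b :: s) <->
  (0 < j)%N /\ is_path (al_internal (j - b) N) s.
Proof.
rewrite /is_path al_internal_cons; split.
  move=> [P NI]; split; first by have := P 0%N isT.
  by split=> // i Hi; have := P i.+1 Hi; rewrite /= al_internal_cons.
move=> [j0 [P NI]]; split=> // [[|i]] Hi //=; rewrite al_internal_cons; exact: P.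
Qed.

Lemma is_path_nil (I : pred bitseq) : is_path I [::] <-> ~~ I [::].
Proof. by rewrite /is_path; split=> [[]|] //. Qed.

Lemma shattered_trivial H (I : pred bitseq) t :
  ~~ I [::] -> (exists h, H h) -> shattered H I t.
Proof.
move=> NI [h Hh] s [P _]; exists h; split=> //.
case: s P => [|b s] P i Hi //.
by have := P 0%N isT; rewrite /= (negbTE NI).
Qed.

Lemma ALsh0 V j : (exists h, V h) -> AL_shatterable V j 0.
Proof.
move=> ne; exists (fun _ => None); split; first by move=> u; rewrite /al_internal ltn0.
exact: shattered_trivial.
Qed.

Lemma ALsh_w0 V d : (exists h, V h) -> AL_shatterable V 0 d.
Proof.
move=> ne; exists (fun _ => None); split; first by move=> u; rewrite /al_internal ltn0 andbF.
by apply: shattered_trivial => //; rewrite /al_internal ltn0 andbF.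
Qed.

Lemma ALsh_nonempty V j d : AL_shatterable V j d -> exists h, V h.
Proof.
move=> [t [_ S]].
have [s Ps] : exists s, is_path (al_internal j d) s.
  elim: d j {t S} => [|d IH] j.
    by exists [::]; split=> // i; rewrite ltn0.
  case: j => [|j].
    by exists [::]; split=> //; rewrite /al_internal ltn0 andbF.
  have [s Ps] := IH j.+1; exists (false :: s).
  by apply/is_path_cons; rewrite subn0.
by have [h [Hh _]] := S s Ps; exists h.
Qed.

Lemma ALsh_sub V V' j d : V `<=` V' -> AL_shatterable V j d -> AL_shatterable V' j d.
Proof.
move=> sub [t [wf S]]; exists t; split=> // s Ps.
by have [h [Hh R]] := S s Ps; exists h; split=> //; apply: sub.
Qed.

Lemma ALsh_depthS V j d : AL_shatterable V j d.+1 -> AL_shatterable V j d.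
Proof.
move=> [t [wf S]]; exists t; split.
  move=> u /andP[Hu Hc]; apply: wf; apply/andP; split=> //; exact: ltnW.
move=> s [P NI].
have Pint : forall i, (i < size s)%N -> al_internal j d.+1 (take i s).
  move=> i Hi; have /andP[a b] := P i Hi; apply/andP; split=> //; exact: ltnW.
case: (boolP (al_internal j d.+1 s)) => Is; last first.
  by apply: S; split.
have [h [Hh R]] : exists h, V h /\ Realize t (rcons s false) h.
  apply: S; split.
    move=> i; rewrite size_rcons ltnS leq_eqVlt => /orP[/eqP ->|Hi].
      by rewrite -cats1 take_size_cat.
    by rewrite -cats1 takel_cat ?Pint // ltnW.
  move: NI Is; rewrite /al_internal size_rcons !ltnS.
  by case: (count id s < j)%N; rewrite ?andbT ?andbF //; lia.
exists h; split=> // i Hi.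
have := R i; rewrite size_rcons ltnS ltnW // => /(_ isT).
by rewrite -cats1 takel_cat ?nth_cat ?Hi // ltnW.
Qed.

Lemma ALsh_depth V j d d' : (d' <= d)%N -> AL_shatterable V j d -> AL_shatterable V j d'.
Proof.
elim: d => [|d IH]; first by rewrite leqn0 => /eqP ->.
rewrite leq_eqVlt => /orP[/eqP -> //|]; rewrite ltnS => le S.
by apply: IH => //; apply: ALsh_depthS.
Qed.

Lemma ALsh_merge V x j d :
  (0 < j)%N ->
  AL_shatterable [set h | V h /\ h x = false] j d ->
  AL_shatterable [set h | V h /\ h x = true] j.-1 d ->
  AL_shatterable V j d.+1.
Proof.
move=> j0 [t0 [wf0 S0]] [t1 [wf1 S1]].
pose t : tree X := fun u => match u with [::] => Some x | b :: u' => if b then t1 u' else t0 u' end.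
exists t; split.
  case=> [|b u] //; rewrite al_internal_cons; case: b => /=.
    by rewrite subn1; apply: wf1.
  by rewrite subn0; apply: wf0.
case=> [|b s].
  by move=> /is_path_nil; rewrite al_internal_nil j0.
move=> /is_path_cons [_ Ps]; case: b Ps => /= Ps.
  have Ps' : is_path (al_internal j.-1 d) s by rewrite -subn1.
  have [h [[Vh hx] R]] := S1 s Ps'.
  by exists h; split=> //; apply/Realize_cons; split; [rewrite /= hx|].
have Ps' : is_path (al_internal j d) s by rewrite -(subn0 j).
have [h [[Vh hx] R]] := S0 s Ps'.
by exists h; split=> //; apply/Realize_cons; split; [rewrite /= hx|].
Qed.

Lemma ex_max_nat (P : nat -> Prop) B :
  P 0%N -> (forall d, P d -> (d <= B)%N) -> exists D, P D /\ forall d, P d -> (d <= D)%N.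
Proof.
elim: B => [|B IH] P0 bnd.
  by exists 0%N; split=> // d /bnd.
case: (pselect (P B.+1)) => PB; first by exists B.+1.
apply: IH => // d Pd; have := bnd d Pd; rewrite leq_eqVlt => /orP[/eqP E|//].
by move: Pd; rewrite E.
Qed.

End Trees.

End Part1.
Import Part1.

Module Part2.
Set Implicit Arguments. Unset Strict Implicit. Unset Printing Implicit Defensive.
Import Order.TTheory GRing.Theory Num.Theory.
Local Open Scope classical_set_scope.
Local Open Scope ring_scope.

Lemma arith1 (R : realType) (eps c e1 e0 d1 DD n J : R) : 0<=eps -> eps <= 1 -> 1 - eps <= eps*c -> eps*d1 <= eps*DD -> (1-eps)*e0 <= (1-eps)*(DD + eps*n + (J+1)*c) -> eps*e1 <= eps*(d1 + eps*n + J*c) -> eps*(0+e1) + (1-eps)*(0+1+e0) <= DD + eps*(n+1) + (J+1)*c.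
Proof. move=> *. lra. Qed.
Lemma arith2 (R : realType) (eps e1 e0 d0 DD n K : R) : 0<=eps -> eps <= 1 -> eps*d0 <= eps*DD -> (1-eps)*e0 <= (1-eps)*(DD + eps*n + K) -> eps*e1 <= eps*(d0 + eps*n + K) -> eps*(1+e1) + (1-eps)*(0+e0) <= DD + eps*(n+1) + K.
Proof. move=> *. lra. Qed.
Lemma arith3 (R : realType) (eps e1 e0 d0 DD n K a : R) : 0<=eps -> d0 + a <= DD -> e1 <= d0 + eps*n + K -> 1*(a+e1) + (1-1)*e0 <= DD + eps*(n+1) + K.
Proof. move=> *. lra. Qed.

Section Upper.
Variables (X : Type).
Implicit Types (V : set (X -> bool)).

Definition bnd V j := exists B, forall d, AL_shatterable V j d -> (d <= B)%N.
Definition dim V j : nat :=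
  xget 0%N [set D | AL_shatterable V j D /\ forall d, AL_shatterable V j d -> (d <= D)%N].

Lemma dimP V j : (exists h, V h) -> bnd V j ->
  AL_shatterable V j (dim V j) /\ forall d, AL_shatterable V j d -> (d <= dim V j)%N.
Proof.
move=> ne [B HB].
have [D HD] : exists D, [set D | AL_shatterable V j D /\ forall d, AL_shatterable V j d -> (d <= D)%N] D.
  by apply: (ex_max_nat (B := B)) => //; apply: ALsh0.
exact: (xgetI 0%N HD).
Qed.

Lemma dim_lt V j D : (exists h, V h) -> bnd V j -> ~ AL_shatterable V j D -> (dim V j < D)%N.
Proof.
move=> ne b NS; have [S _] := dimP ne b; rewrite ltnNge; apply/negP => le.
by apply: NS; apply: ALsh_depth S.
Qed.

Lemma dim_sub V V' j : V' `<=` V -> (exists h, V' h) -> bnd V j ->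
  bnd V' j /\ (dim V' j <= dim V j)%N.
Proof.
move=> sub ne b.
have ne' : exists h, V h by case: ne => h /sub; exists h.
have [_ M] := dimP ne' b.
have b' : bnd V' j by exists (dim V j) => d S; apply: M; apply: ALsh_sub S.
split=> //; have [S' _] := dimP ne b'; apply: M; exact: ALsh_sub S'.
Qed.

Definition V0 V (x : X) := [set h | V h /\ h x = false].
Definition V1 V (x : X) := [set h | V h /\ h x = true].

Definition explore V j x : bool := `[< AL_shatterable (V0 V x) j (dim V j) >].

Definition step (st : set (X -> bool) * nat) (e : X * bool * option bool) :=
  let: (V, j) := st in let: (x, _, o) := e in
  match o with
  | None => st
  | Some y => if y then (V1 V x, if explore V j x then j.-1 else j) else (V0 V x, j)
  end.

Variables (R : realType) (H : set (X -> bool)) (w : nat) (eps c : R).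
Hypothesis eps0 : 0 <= eps.
Hypothesis eps1 : eps <= 1.
Hypothesis c0 : 0 <= c.
Hypothesis epsc : (1 < w)%N -> 1 - eps <= eps * c.

Definition state (hs : history X) := foldl step (H, w) hs.

Definition lrn : learner R X := fun hs x =>
  let: (V, j) := state hs in if explore V j x then eps else 1.

Lemma lrn_valid : valid_learner lrn.
Proof.
move=> hs x; rewrite /lrn; case: (state hs) => V j; case: explore.
  by rewrite eps0 eps1.
by rewrite ler01 lexx.
Qed.

Definition Phi V j (n : nat) : R := (dim V j)%:R + eps * n%:R + (j.-1)%:R * c.

Lemma exp_ge0 (A : learner R X) h hs xs : valid_learner A -> 0 <= exp_mistakes A h hs xs.
Proof.
move=> vA; elim: xs hs => [|x xs IH] hs /=; first by [].
have /andP[a b] := vA hs x.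
apply: addr_ge0; apply: mulr_ge0; rewrite ?subr_ge0 //; apply: addr_ge0 => //.
Qed.

Lemma upper_main h : forall xs hs V j, state hs = (V, j) -> V h -> (0 < j)%N -> (j <= w)%N ->
  bnd V j -> exp_mistakes lrn h hs xs <= Phi V j (size xs).
Proof.
elim=> [|x xs IH] hs V j st Vh j0 jw b.
  rewrite /= /Phi; apply: addr_ge0; first apply: addr_ge0 => //.
    by apply: mulr_ge0.
  by apply: mulr_ge0.
have ne : exists h, V h by exists h.
have [SD MD] := dimP ne b.
set D := dim V j in SD MD.
rewrite /= {1 3}/lrn st.
have stS : forall e, state (rcons hs e) = step (V, j) e.
  by move=> e; rewrite /state foldl_rcons -/(state hs) st.
have E1 := stS (x, true, Some (h x)); have E0 := stS (x, false, None).
rewrite /= in E0.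
have IH0 := IH _ _ _ E0 Vh j0 jw b.
rewrite /Phi in IH0 *.
rewrite -/D in IH0 *.
case: (boolP (explore V j x)) => ex.
- case hx: (h x).
  +
    have NS1 : ~ AL_shatterable (V1 V x) j.-1 D.
      move=> S1; have := ALsh_merge j0 (asboolW ex) S1.
      by move=> /MD; rewrite ltnn.
    have j1 : (1 < j)%N.
      rewrite ltnNge; apply/negP => j1; have j1' : j = 1%N by lia.
      move: NS1; rewrite j1' /= => NS1; apply: NS1; apply: ALsh_w0; by exists h.
    have V1h : V1 V x h by [].
    have ne1 : exists h, V1 V x h by exists h.
    have b1 : bnd (V1 V x) j.-1.
      exists D => d S; rewrite leqNgt; apply/negP => lt; apply: NS1.
      by apply: ALsh_depth S; apply: ltnW.
    have lt1 : (dim (V1 V x) j.-1 < D)%N by apply: dim_lt.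
    rewrite hx /= ex in E1.
    have jp0 : (0 < j.-1)%N by rewrite -subn1 subn_gt0.
    have IH1 := IH _ _ _ E1 V1h jp0 (leq_trans (leq_pred j) jw) b1.
    rewrite /Phi in IH1.
    have wc := epsc (leq_trans j1 jw).
    have {}lt1 : (dim (V1 V x) j.-1)%:R <= (D%:R : R) by rewrite ler_nat ltnW.
    have jj : ((j.-1)%:R : R) = (j.-1.-1)%:R + 1 by rewrite natr1; congr _%:R; lia.
    rewrite jj.
    set e1 := exp_mistakes _ _ _ _ in IH1 *.
    set e0 := exp_mistakes _ _ _ _ in IH0 *.
    set d1 := (dim _ _)%:R in IH1 lt1.
    rewrite -natr1 in IH0 *.
    have e1p : 0 <= 1 - eps by rewrite subr_ge0.
    have := ler_wpM2l eps0 IH1.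
    have := ler_wpM2l e1p IH0.
    have := ler_wpM2l eps0 lt1.
    rewrite /= -natr1.
    set n := (size xs)%:R; set J := j.-2%:R; set DD := D%:R.
    move=> a1 a2 a3.
    rewrite jj in a2.
    exact: arith1 eps0 eps1 wc a1 a2 a3.
  + rewrite hx /= in E1.
    have V0h : V0 V x h by [].
    have ne0 : exists h, V0 V x h by exists h.
    have [b0 le0] := dim_sub (fun h (H : V0 V x h) => H.1) ne0 b.
    have IH1 := IH _ _ _ E1 V0h j0 jw b0.
    rewrite /Phi in IH1.
    have e1p : 0 <= 1 - eps by rewrite subr_ge0.
    have a3 := ler_wpM2l eps0 IH1.
    have a2 := ler_wpM2l e1p IH0.
    have a1 : eps * (dim (V0 V x) j)%:R <= eps * D%:R by rewrite ler_wpM2l // ler_nat.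
    rewrite /= -[((size xs).+1)%:R]natr1.
    exact: arith2 eps0 eps1 a1 a2 a3.
- have nex : ~ AL_shatterable (V0 V x) j D by move=> S; move: ex; rewrite /explore asboolT.
  rewrite /= -[((size xs).+1)%:R]natr1.
  case hx: (h x); rewrite hx /= ?(negbTE ex) in E1.
  + have V1h : V1 V x h by [].
    have ne1 : exists h, V1 V x h by exists h.
    have [b1 le1] := dim_sub (fun h (H : V1 V x h) => H.1) ne1 b.
    have IH1 := IH _ _ _ E1 V1h j0 jw b1.
    rewrite /Phi in IH1.
    apply: (@arith3 _ eps _ _ (dim (V1 V x) j)%:R) => //.
    by rewrite addr0 ler_nat.
  + have V0h : V0 V x h by [].
    have ne0 : exists h, V0 V x h by exists h.
    have [b0 le0] := dim_sub (fun h (H : V0 V x h) => H.1) ne0 b.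
    have IH1 := IH _ _ _ E1 V0h j0 jw b0.
    rewrite /Phi in IH1.
    apply: (@arith3 _ eps _ _ (dim (V0 V x) j)%:R) => //.
    by rewrite natr1 ler_nat; apply: dim_lt.
Qed.
End Upper.

End Part2.
Import Part2.

Module Part3.
Set Implicit Arguments. Unset Strict Implicit. Unset Printing Implicit Defensive.
Import Order.TTheory GRing.Theory Num.Theory.
Local Open Scope classical_set_scope.
Local Open Scope ring_scope.

Section HB.
Variables (R : realType) (p : R).
Hypothesis p0 : 0 <= p.
Hypothesis p1 : p <= 1.

Fixpoint hb (j i : nat) : R :=
  match i with
  | 0%N => (0 < j)%N%:R
  | i'.+1 => match j with 0%N => 0 | j'.+1 => (1 - p) * hb j i' + p * hb j' i' end
  end.

Definition g j N := \sum_(i < N) hb j i.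

Lemma hb0 i : hb 0 i = 0.
Proof. by case: i. Qed.

Lemma hb_ge0 j i : 0 <= hb j i.
Proof.
elim: i j => [|i IH] [|j] //=; apply: addr_ge0; apply: mulr_ge0 => //.
by rewrite subr_ge0.
Qed.

Lemma hb_le1 j i : hb j i <= 1.
Proof.
elim: i j => [|i IH] [|j] /=; rewrite ?ler01 ?lexx //.
have := IH j.+1; have := IH j; have := hb_ge0 j.+1 i; have := hb_ge0 j i.
move=> a b c d.
have e : (1 - p) * hb j.+1 i <= (1 - p) by rewrite -[X in _ <= X]mulr1 ler_wpM2l // subr_ge0.
have f : p * hb j i <= p by rewrite -[X in _ <= X]mulr1 ler_wpM2l.
lra.
Qed.

Lemma hb_monoS j i : hb j i <= hb j.+1 i.
Proof.
elim: i j => [|i IH] [|j] /=.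
- by [].
- by rewrite ler_nat.
- by apply: addr_ge0; apply: mulr_ge0; rewrite ?subr_ge0 ?hb_ge0.
- apply: lerD; apply: ler_wpM2l; rewrite ?subr_ge0 //; exact: IH.
Qed.

Lemma hb_mono a b i : (a <= b)%N -> hb a i <= hb b i.
Proof.
elim: b => [|b IH]; first by rewrite leqn0 => /eqP ->.
rewrite leq_eqVlt => /orP[/eqP -> //|]; rewrite ltnS => /IH le.
exact: le_trans le (hb_monoS _ _).
Qed.

Lemma hb_sum J i : \sum_(j' < J) (1 - hb j'.+1 i) <= i%:R * p.
Proof.
elim: i J => [|i IH] J.
  by rewrite big1 ?mul0r // => k _ /=; rewrite subrr.
rewrite (eq_bigr (fun j' : 'I_J => (1 - p) * (1 - hb j'.+1 i) + p * (1 - hb j' i))); last first.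
  by move=> k _ /=; ring.
rewrite big_split /= -!mulr_sumr.
case: J => [|J].
  by rewrite !big_ord0 !mulr0 addr0 mulr_ge0 // ler0n.
rewrite [X in p * X]big_ord_recl /= hb0 subr0.
rewrite (eq_bigr (fun k : 'I_J => 1 - hb k.+1 i)); last by move=> k _; rewrite /bump /= add1n.
have a := IH J.+1; have b := IH J.
have c : (1 - p) * (\sum_(k < J.+1) (1 - hb k.+1 i)) <= (1 - p) * (i%:R * p).
  by rewrite ler_wpM2l // subr_ge0.
have d : p * (1 + \sum_(k < J) (1 - hb k.+1 i)) <= p * (1 + i%:R * p).
  by rewrite ler_wpM2l // lerD2l.
rewrite -natr1; lra.
Qed.

Lemma hb_markov j i : j%:R - i%:R * p <= j%:R * hb j i.
Proof.
have := hb_sum j i.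
have : \sum_(j' < j) (1 - hb j i) <= \sum_(j' < j) (1 - hb j'.+1 i).
  apply: ler_sum => k _; rewrite lerD2l lerN2; apply: hb_mono; exact: ltn_ord.
have e : (1 - hb j i) *+ j = j%:R - j%:R * hb j i by rewrite -mulr_natl mulrBr mulr1.
rewrite sumr_const card_ord e => a b; lra.
Qed.

Lemma g_rec j N : g j.+1 N.+1 = 1 + (1 - p) * g j.+1 N + p * g j N.
Proof.
rewrite /g big_ord_recl /=.
rewrite (eq_bigr (fun i : 'I_N => (1 - p) * hb j.+1 i + p * hb j i)) //.
by rewrite big_split /= -!mulr_sumr addrA.
Qed.

Lemma g0 N : g 0 N = 0.
Proof. by rewrite /g big1 // => i _; rewrite hb0. Qed.

Lemma gN0 j : g j 0 = 0.
Proof. by rewrite /g big_ord0. Qed.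

Lemma g_bound j N : 2 * j%:R * N%:R - p * N%:R * (N%:R - 1) <= 2 * j%:R * g j N.
Proof.
elim: N => [|N IH]; first by rewrite gN0 !mulr0 mul0r subrr.
rewrite /g big_ord_recr /= -/(g j N) mulrDr.
have := hb_markov j N; rewrite -natr1; move=> a; lra.
Qed.

End HB.

End Part3.
Import Part3.

Module Part4.
Set Implicit Arguments. Unset Strict Implicit. Unset Printing Implicit Defensive.
Import Order.TTheory GRing.Theory Num.Theory.
Local Open Scope classical_set_scope.
Local Open Scope ring_scope.

Fixpoint enum_al (j N : nat) : seq bitseq :=
  match N with
  | 0%N => [:: [::]]
  | N'.+1 => match j with
             | 0%N => [:: [::]]
             | j'.+1 => map (cons false) (enum_al j N') ++ map (cons true) (enum_al j' N')
             end
  end.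

Lemma enum_al_path j N s : s \in enum_al j N -> is_path (al_internal j N) s.
Proof.
elim: N j s => [|N IH] j s /=.
  by rewrite inE => /eqP ->; apply/is_path_nil; rewrite al_internal_nil.
case: j => [|j].
  by rewrite inE => /eqP ->; apply/is_path_nil; rewrite al_internal_nil andbF.
rewrite mem_cat => /orP[] /mapP [s' Hs' ->]; apply/is_path_cons; split=> //.
  by rewrite subn0; apply: IH.
by rewrite subn1; apply: IH.
Qed.

Lemma enum_al_size j N s : s \in enum_al j N -> (size s <= N)%N.
Proof.
elim: N j s => [|N IH] j s /=; first by rewrite inE => /eqP ->.
case: j => [|j]; first by rewrite inE => /eqP ->.
by rewrite mem_cat => /orP[] /mapP [s' Hs' ->] /=; rewrite ltnS; apply: IH Hs'.
Qed.

Lemma enum_al_nonempty j N : exists s, s \in enum_al j N.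
Proof.
elim: N j => [|N IH] [|j] /=; try by exists [::]; rewrite inE.
have [s Hs] := IH j.+1; exists (false :: s); rewrite mem_cat; apply/orP; left.
by apply/mapP; exists s.
Qed.

Section Engine.
Variables (R : realType) (X : Type) (A : learner R X) (p : R) (m : nat).
Hypothesis vA : valid_learner A.
Hypothesis p0 : 0 <= p.
Hypothesis p1 : p <= 1.

Definition wt (s : bitseq) : R := \prod_(b <- s) (if b then p else 1 - p).

Lemma wt_ge0 s : 0 <= wt s.
Proof. by apply: prodr_ge0 => b _; case: b; rewrite ?subr_ge0. Qed.

Lemma wt_cons b s : wt (b :: s) = (if b then p else 1 - p) * wt s.
Proof. by rewrite /wt big_cons. Qed.

Lemma sum_cons (l : seq bitseq) b : \sum_(s <- l) wt (b :: s) = (if b then p else 1 - p) * \sum_(s <- l) wt s.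
Proof. by rewrite mulr_sumr; apply: eq_bigr => s _; rewrite wt_cons. Qed.

Lemma sum_wt j N : \sum_(s <- enum_al j N) wt s = 1.
Proof.
elim: N j => [|N IH] [|j] /=; rewrite ?big_seq1 ?/wt ?big_nil //.
rewrite big_cat !big_map !sum_cons !IH !mulr1 /=; exact: subrK.

Qed.

Fixpoint blocks (t : tree X) (s : bitseq) : seq X :=
  match s with
  | [::] => [::]
  | b :: s' => match t [::] with
               | Some x => nseq m x ++ blocks (tsub t b) s'
               | None => [::]
               end
  end.

Lemma blocks_size t s : (size (blocks t s) <= m * size s)%N.
Proof.
elim: s t => [|b s IH] t //=; case: (t [::]) => [x|] //.
rewrite size_cat size_nseq mulnS leq_add2l; exact: IH.
Qed.

Lemma exp_cons h hs x xs : exp_mistakes A h hs (x :: xs) =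
  A hs x * ((~~ h x)%:R + exp_mistakes A h (rcons hs (x, true, Some (h x))) xs)
  + (1 - A hs x) * ((h x)%:R + exp_mistakes A h (rcons hs (x, false, None)) xs).
Proof. by []. Qed.

Lemma exp_cat h hs xs ys : exp_mistakes A h hs xs <= exp_mistakes A h hs (xs ++ ys).
Proof.
elim: xs hs => [|x xs IH] hs /=; first exact: exp_ge0.
have /andP[a b] := vA hs x.
apply: lerD; apply: ler_wpM2l; rewrite ?subr_ge0 // lerD2l; exact: IH.
Qed.

Lemma wsum_split (I : Type) (s : seq I) (ws f0 f1 : I -> R) (q a b : R) :
  \sum_(i <- s) ws i = 1 ->
  \sum_(i <- s) ws i * (q * (a + f1 i) + (1 - q) * (b + f0 i)) =
  q * (a + \sum_(i <- s) ws i * f1 i) + (1 - q) * (b + \sum_(i <- s) ws i * f0 i).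
Proof.
move=> W.
rewrite (eq_bigr (fun i => (q * a) * ws i + q * (ws i * f1 i) + ((1 - q) * b * ws i + (1 - q) * (ws i * f0 i)))); last by move=> i _; ring.
rewrite !big_split /= -!mulr_sumr W; ring.
Qed.

Definition beta := Num.min (p * m%:R) (1 - p).

Lemma block_arith (q a0 a1 b0 b1 F0 F1 mr mu : R) :
  0 <= q -> q <= 1 -> F0 <= a0 -> F1 <= a1 ->
  (1 - p) * F0 + p * F1 + mr <= (1 - p) * b0 + p * b1 ->
  mu <= 1 - p -> mu <= p + mr ->
  (1 - p) * F0 + p * F1 + mu <=
  (1 - p) * (q * (1 + a0) + (1 - q) * (0 + b0)) + p * (q * (0 + a1) + (1 - q) * (1 + b1)).
Proof.
move=> q0 q1 h0 h1 hb m1 m2.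
have e : (1 - p) * (q * (1 + a0) + (1 - q) * (0 + b0)) + p * (q * (0 + a1) + (1 - q) * (1 + b1))
  = q * ((1 - p) + ((1 - p) * a0 + p * a1)) + (1 - q) * (p + ((1 - p) * b0 + p * b1)) by ring.
rewrite e.
have c0 : (1 - p) * F0 <= (1 - p) * a0 by rewrite ler_wpM2l // subr_ge0.
have c1 : p * F1 <= p * a1 by rewrite ler_wpM2l.
have d0 : q * ((1 - p) * F0 + p * F1 + mu) <= q * ((1 - p) + ((1 - p) * a0 + p * a1)).
  rewrite ler_wpM2l //; lra.
have d1 : (1 - q) * ((1 - p) * F0 + p * F1 + mu) <= (1 - q) * (p + ((1 - p) * b0 + p * b1)).
  rewrite ler_wpM2l ?subr_ge0 //; lra.
have : (1 - p) * F0 + p * F1 + mu = q * ((1 - p) * F0 + p * F1 + mu) + (1 - q) * ((1 - p) * F0 + p * F1 + mu) by ring.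
lra.
Qed.

Lemma engine_rec N : forall j (t : tree X) (hf : bitseq -> X -> bool) hs,
  (forall s, s \in enum_al j N -> Realize t s (hf s)) ->
  beta * g p j N <= \sum_(s <- enum_al j N) wt s * exp_mistakes A (hf s) hs (blocks t s).
Proof.
elim: N => [|N IH] j t hf hs Rz.
  rewrite gN0 mulr0; apply: sumr_ge0 => s _; apply: mulr_ge0; [exact: wt_ge0|exact: exp_ge0].
case: j Rz => [|j] Rz.
  rewrite g0 mulr0; apply: sumr_ge0 => s _; apply: mulr_ge0; [exact: wt_ge0|exact: exp_ge0].
have [s0 Hs0] := enum_al_nonempty j.+1 N.
have mem0 : forall s, s \in enum_al j.+1 N -> (false :: s) \in enum_al j.+1 N.+1.
  by move=> s Hs; rewrite /= mem_cat; apply/orP; left; apply/mapP; exists s.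
have mem1 : forall s, s \in enum_al j N -> (true :: s) \in enum_al j.+1 N.+1.
  by move=> s Hs; rewrite /= mem_cat; apply/orP; right; apply/mapP; exists s.
pose Eb (b : bool) := if b then enum_al j N else enum_al j.+1 N.
have memb : forall b s, s \in Eb b -> (b :: s) \in enum_al j.+1 N.+1.
  by case=> s Hs; [apply: mem1|apply: mem0].
have := Rz _ (mem0 _ Hs0); move/Realize_cons => [+ _].
case tx: (t [::]) => [x|] //= _.
have hfx : forall b s, s \in Eb b -> hf (b :: s) x = b.
  move=> b s Hs; have := Rz _ (memb _ _ Hs); move/Realize_cons => [+ _].
  by rewrite tx /= => -[].
have Rzb : forall b s, s \in Eb b -> Realize (tsub t b) s (hf (b :: s)).
  by move=> b s Hs; have := Rz _ (memb _ _ Hs); move/Realize_cons => [_].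
pose S b hs r := \sum_(s <- Eb b) wt s * exp_mistakes A (hf (b :: s)) hs (nseq r x ++ blocks (tsub t b) s).
pose F (b : bool) := beta * g p (if b then j else j.+1) N.
have IHb : forall b hs, F b <= S b hs 0%N.
  by move=> b hs'; case: b; apply: IH => s Hs; [apply: (Rzb true)|apply: (Rzb false)].
have W : forall b, \sum_(s <- Eb b) wt s = 1 by case=> /=; apply: sum_wt.
have Srec : forall b hs r, S b hs r.+1 =
   A hs x * ((~~ b)%:R + S b (rcons hs (x, true, Some b)) r)
   + (1 - A hs x) * (b%:R + S b (rcons hs (x, false, None)) r).
  move=> b hs' r; rewrite /S -wsum_split //.
  rewrite big_seq [RHS]big_seq; apply: eq_bigr => s Hs.
  by rewrite [nseq r.+1 x ++ _]/= exp_cons hfx.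
have Smono : forall b r hs, F b <= S b hs r.
  move=> b; elim=> [|r IHr] hs'; first exact: IHb.
  rewrite Srec; have /andP[q0 q1] := vA hs' x.
  have e : F b = A hs' x * F b + (1 - A hs' x) * F b by ring.
  rewrite e; apply: lerD; apply: ler_wpM2l; rewrite ?subr_ge0 //.
    by rewrite -[F b]add0r lerD ?ler0n.
  by rewrite -[F b]add0r lerD ?ler0n.
have Block : forall r hs, (1 - p) * F false + p * F true + Num.min (p * r%:R) (1 - p)
    <= (1 - p) * S false hs r + p * S true hs r.
  elim=> [|r IHr] hs'.
    rewrite mulr0 min_l ?subr_ge0 // addr0.
    by apply: lerD; apply: ler_wpM2l; rewrite ?subr_ge0 //; apply: IHb.
  rewrite !Srec /= mulr1n mulr0n.
  have /andP[q0 q1] := vA hs' x.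
  apply: block_arith => //.
  + by rewrite ge_min lexx orbT.
  + case: (leP (p * r%:R) (1 - p)) => le.
      by rewrite ge_min -natr1 mulrDr mulr1 addrC lexx.
    by rewrite ge_min lerDr p0 orbT.
rewrite [enum_al _ _]/= big_cat !big_map.
have sumb : forall b, \sum_(s <- Eb b) wt (b :: s) * exp_mistakes A (hf (b :: s)) hs (blocks t (b :: s))
    = (if b then p else 1 - p) * S b hs m.
  move=> b; rewrite /S mulr_sumr; apply: eq_bigr => s _.
  by rewrite wt_cons /= tx mulrA.
have := sumb false; have := sumb true; rewrite /= => -> ->.
rewrite g_rec.
have := Block m hs; rewrite /F -/beta => B.
have e : beta * (1 + (1 - p) * g p j.+1 N + p * g p j N) =
  (1 - p) * (beta * g p j.+1 N) + p * (beta * g p j N) + beta by ring.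
by rewrite e.
Qed.

End Engine.

End Part4.
Import Part4.

Module Part5.
Set Implicit Arguments. Unset Strict Implicit. Unset Printing Implicit Defensive.
Import Order.TTheory GRing.Theory Num.Theory.
Local Open Scope classical_set_scope.
Local Open Scope ring_scope.

Lemma wavg (R : realType) (T : eqType) (s : seq T) (ws f : T -> R) :
  (forall x, x \in s -> 0 <= ws x) -> \sum_(x <- s) ws x = 1 -> s != [::] ->
  exists2 y, y \in s & \sum_(x <- s) ws x * f x <= f y.
Proof.
move=> w0 w1 ne.
have [y ys ymax] : exists2 y, y \in s & forall x, x \in s -> f x <= f y.
  case: s ne {w0 w1} => [//|a s] _.
  elim: s a => [|b s IH] a.
    by exists a; rewrite ?inE // => x; rewrite inE => /eqP ->.
  have [y ys ymax] := IH b.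
  case: (leP (f a) (f y)) => le.
    exists y; first by rewrite inE ys orbT.
    move=> x; rewrite inE => /orP[/eqP ->//|]; exact: ymax.
  exists a; first by rewrite inE eqxx.
  move=> x; rewrite inE => /orP[/eqP ->//|/ymax le2]; exact: le_trans le2 (ltW le).
exists y => //.
have : \sum_(x <- s) ws x * f x <= \sum_(x <- s) ws x * f y.
  by rewrite big_seq [X in _ <= X]big_seq; apply: ler_sum => x xs; rewrite ler_wpM2l ?w0 ?ymax.
by rewrite -mulr_suml w1 mul1r.
Qed.

Section Final.
Variables (R : realType) (X : Type) (H : set (X -> bool)).

Lemma lower_M (A : learner R X) (p : R) (m j N T : nat) :
  valid_learner A -> AL_shatterable H j N -> (N * m <= T)%N -> 0 <= p -> p <= 1 ->
  ((beta p m * g p j N)%:E <= Mworst A T H)%E.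
Proof.
move=> vA [t [wf Sh]] NmT p0 p1.
have : forall s, exists h, s \in enum_al j N -> H h /\ Realize t s h.
  move=> s; case: (pselect (s \in enum_al j N)) => Hs.
    by have [h [Hh Rh]] := Sh s (enum_al_path Hs); exists h.
  by exists (fun _ => false).
move=> /choice [hf Hhf].
have := engine_rec m vA p0 p1 [::] (fun s Hs => (Hhf s Hs).2).
have [s0 Hs0] := enum_al_nonempty j N.
have ne : enum_al j N != [::] by apply/eqP => E; rewrite E in Hs0.
have [s Hs le] := wavg (fun s => exp_mistakes A (hf s) [::] (blocks m t s))
   (fun x _ => wt_ge0 p0 p1 x) (sum_wt p j N) ne.
move=> le2; have {le2 le} le := le_trans le2 le.
set xs0 := blocks m t s in le.
have sz : (size xs0 <= T)%N.
  apply: leq_trans (blocks_size m t s) _; rewrite mulnC; apply: leq_trans NmT.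
  by rewrite leq_mul2r (enum_al_size Hs) orbT.
case E0 : xs0 => [|x0 xs1].
  rewrite E0 /= in le.
  apply: le_ereal_sup_tmp; exists 0%E; first by left.
  by rewrite lee_fin.
apply: le_ereal_sup_tmp; exists (exp_mistakes A (hf s) [::] (xs0 ++ nseq (T - size xs0) x0))%:E.
  right; exists (hf s), (xs0 ++ nseq (T - size xs0) x0); split; first exact: (Hhf s Hs).1.
  by rewrite size_cat size_nseq subnKC.
rewrite lee_fin; apply: le_trans le _; exact: exp_cat.
Qed.

Lemma upper_M (w : nat) (eps c : R) (T : nat) :
  0 <= eps -> eps <= 1 -> 0 <= c -> ((1 < w)%N -> 1 - eps <= eps * c) ->
  (0 < w)%N -> bnd H w ->
  (Mworst (lrn H w eps) T H <= ((dim H w)%:R + eps * T%:R + (w.-1)%:R * c)%:E)%E.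
Proof.
move=> e0 e1 c0 ec w0 b.
apply: ge_ereal_sup => y [->|[h [xs [Hh [sz ->]]]]].
  rewrite lee_fin; apply: addr_ge0; first apply: addr_ge0 => //.
    by apply: mulr_ge0.
  by apply: mulr_ge0.
rewrite lee_fin -sz.
exact: (upper_main e0 e1 c0 ec xs (hs := [::]) (V := H) (j := w)).
Qed.

End Final.

End Part5.
Import Part5.

Module Part6.
Set Implicit Arguments. Unset Strict Implicit. Unset Printing Implicit Defensive.
Import Order.TTheory GRing.Theory Num.Theory.
Local Open Scope classical_set_scope.
Local Open Scope ring_scope.

Section Dims.
Variables (R : realType) (X : Type) (H : set (X -> bool)).

Lemma ALdim_ge0 w : (0 <= ALdim R H w)%E.
Proof. by apply: le_ereal_sup_tmp; exists 0%E; [left|]. Qed.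

Lemma ALdim_fin w : (ALdim R H w < +oo)%E -> bnd H w.
Proof.
move=> lt.
have [r Er] : exists r, ALdim R H w = r%:E.
  move: lt (ALdim_ge0 w); case: (ALdim R H w) => [r| |] //; by exists r.
exists (Num.truncn r) => d Pd.
have : ((d%:R)%:E <= ALdim R H w)%E.
  by apply: le_ereal_sup_tmp; exists (d%:R)%:E => //; right; exists d.
rewrite Er lee_fin => le.
have := le_lt_trans le (truncnS_gt r).
by rewrite ltr_nat ltnS.
Qed.

Lemma ALdim_inf w : ~ (ALdim R H w < +oo)%E -> forall d, AL_shatterable H w d.
Proof.
move=> NL d; case: (pselect (AL_shatterable H w d)) => // Nd; exfalso; apply: NL.
apply: (le_lt_trans (y := (d%:R)%:E)); last by rewrite ltey.
apply: ge_ereal_sup => y [->|[d' Pd' <-]]; rewrite lee_fin ?ler0n // ler_nat.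
rewrite leqNgt; apply/negP => lt; apply: Nd; apply: ALsh_depth Pd'; exact: ltnW.
Qed.

Lemma dim_le_ALdim w : (exists h, H h) -> bnd H w -> (((dim H w)%:R)%:E <= ALdim R H w)%E.
Proof.
move=> ne b; apply: le_ereal_sup_tmp; exists ((dim H w)%:R)%:E => //.
by right; exists (dim H w) => //; exact: (dimP ne b).1.
Qed.

Lemma effW_cases :
  (effW R H = +oo%E /\ forall w, (0 < w)%N -> ~ (ALdim R H w < +oo)%E) \/
  exists w0, effW R H = ((w0%:R)%:E) /\ (0 < w0)%N /\ (ALdim R H w0 < +oo)%E /\
     forall w, (0 < w)%N -> (w < w0)%N -> ~ (ALdim R H w < +oo)%E.
Proof.
case: (pselect (exists w, (0 < w)%N /\ (ALdim R H w < +oo)%E)) => [ex|nex].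
  right.
  pose P := fun w => `[< (0 < w)%N /\ (ALdim R H w < +oo)%E >].
  have exP : exists w, P w by case: ex => w hw; exists w; apply/asboolP.
  case: (ex_minnP exP) => w0 /asboolP [w00 fin] minw.
  exists w0; split; [|split; [|split]] => //.
    apply/eqP; rewrite eq_le; apply/andP; split.
      by apply: ge_ereal_inf; exists ((w0%:R)%:E) => //; exists w0.
    apply: le_ereal_inf_tmp => y [w [w0' fin'] <-]; rewrite lee_fin ler_nat; apply: minw.
    by apply/asboolP.
  move=> w wpos lt fin'.
  have := minw w (asboolT (conj wpos fin')); by rewrite leqNgt lt.
left; split; last by move=> w wpos fin; apply: nex; exists w.
by apply/ereal_inf_pinfty => y [w [wpos fin] _]; exfalso; apply: nex; exists w.
Qed.

Lemma L_to_AL d : L_shatterable H d -> AL_shatterable H d.+1 d.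
Proof.
have E : lit_internal d = al_internal d.+1 d.
  apply: funext => u; rewrite /lit_internal /al_internal.
  case: (ltnP (size u) d) => //= lt; symmetry; rewrite ltnS.
  exact: leq_trans (count_size _ _) (ltnW lt).
by move=> [t [wf S]]; exists t; rewrite -E.
Qed.

Lemma L_engine (A : learner R X) d T : valid_learner A -> L_shatterable H d -> (d <= T)%N ->
  (((d%:R / 8))%:E <= Mworst A T H)%E.
Proof.
move=> vA Ld dT.
have p0 : (0 : R) <= 1/2 by rewrite divr_ge0 ?ler0n.
have p1 : (1/2 : R) <= 1 by rewrite ler_pdivrMr ?ltr0n // mul1r ler1n.
have dm : (d * 1 <= T)%N by rewrite muln1.
have := lower_M (m := 1) vA (L_to_AL Ld) dm p0 p1.
apply: le_trans; rewrite lee_fin /beta mulr1.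
have -> : 1 - 1/2 = (1/2 : R) by field.
rewrite minxx.
have gb := g_bound p0 p1 d.+1 d.
have d0 : (0 : R) <= d%:R by rewrite ler0n.
rewrite -[d.+1%:R]natr1 in gb *.
set G := g _ _ _ in gb *.
set D := d%:R in gb d0 *.
have : D / 4 <= G.
  rewrite leNgt; apply/negP => lt.
  have pos : (0 : R) < 2 * (D + 1) by lra.
  have lt2 : 2 * (D + 1) * G < 2 * (D + 1) * (D / 4) by rewrite ltr_pM2l.
  have := mulr_ge0 d0 d0.
  lra.
lra.
Qed.

Lemma k_engine (A : learner R X) k T : valid_learner A -> (0 < k)%N -> (0 < T)%N ->
  (forall d, AL_shatterable H k d) ->
  (((Num.min (Num.sqrt (k%:R * T%:R)) T%:R) / 8)%:E <= Mworst A T H)%E.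
Proof.
move=> vA k0 T0 Hk.
have [N [[NT NN] Nmax]] := ex_max_nat (P := fun n => (n <= T)%N /\ (n * n <= k * T)%N)
   (B := T) (conj (leq0n T) (leq0n _)) (fun d h => h.1).
have N1 : (1 <= N)%N by apply: Nmax; split => //; rewrite mul1n muln_gt0 k0 T0.
set m := (T %/ N)%N.
have m1 : (1 <= m)%N by rewrite divn_gt0.
have NmT : (N * m <= T)%N by rewrite mulnC leq_trunc_div.
have key : (N <= 2 * k * m)%N.
  have c := ltn_ceil T N1.
  have : (N * N < k * (m.+1 * N))%N by apply: leq_ltn_trans NN _; rewrite ltn_pmul2l.
  rewrite mulnA ltn_pmul2r // => lt.
  nia.
pose p : R := if (1/2 : R) <= k%:R / N%:R then 1/2 else k%:R / N%:R.
have Npos : (0 : R) < N%:R by rewrite ltr0n.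
have kpos : (0 : R) < k%:R by rewrite ltr0n.
have hp : 0 <= p /\ p <= 1/2 /\ p * N%:R <= k%:R /\ 1/2 <= p * m%:R.
  rewrite /p; case: ifP => h.
    split; first by lra.
    split; first by lra.
    split; first by move: h; rewrite ler_pdivlMr.
    have : (1 : R) <= m%:R by rewrite ler1n.
    lra.
  move/negbT: h; rewrite -ltNge => h.
  split; first by apply: divr_ge0; rewrite ler0n.
  split; first exact: ltW.
  split; first by rewrite divfK // gt_eqF.
  rewrite mulrAC ler_pdivlMr //.
  have : (N%:R : R) <= (2 * k * m)%N%:R by rewrite ler_nat.
  rewrite !natrM; lra.
case: hp => p0 [p2 [pN pm]].
have p1 : p <= 1 by apply: le_trans p2 _; rewrite ler_pdivrMr ?ltr0n // mul1r ler1n.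
have := lower_M vA (Hk N) NmT p0 p1.
apply: le_trans; rewrite lee_fin.
have hb : 1/2 <= beta p m.
  by rewrite /beta le_min pm /=; lra.
have gb := g_bound p0 p1 k N.
set G := g _ _ _ in gb *.
have N1r : (1 : R) <= N%:R by rewrite ler1n.
have t1 : p * N%:R * (N%:R - 1) <= k%:R * (N%:R - 1) by rewrite ler_wpM2r // subr_ge0.
have hG : N%:R / 2 <= G.
  rewrite leNgt; apply/negP => lt.
  have lt2 : 2 * k%:R * G < 2 * k%:R * (N%:R / 2) by rewrite ltr_pM2l // mulr_gt0.
  lra.
have hBG : 1/2 * (N%:R / 2) <= beta p m * G.
  have : (0 : R) <= N%:R by rewrite ler0n.
  by move=> ?; apply: ler_pM => //; lra.
have hmin : Num.min (Num.sqrt (k%:R * T%:R : R)) T%:R <= 2 * N%:R.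
  case: (eqVneq N T) => [<-|NT'].
    by rewrite ge_min; apply/orP; right; lra.
  have NT2 : (N < T)%N by rewrite ltn_neqAle NT' NT.
  have NP : ~ (N.+1 * N.+1 <= k * T)%N.
    by move=> h; have := Nmax N.+1 (conj NT2 h); rewrite ltnn.
  have h2 : (k%:R * T%:R : R) <= (N.+1%:R) ^+ 2.
    by rewrite -natrM -natrX ler_nat -mulnn; apply: ltnW; rewrite ltnNge; apply/negP.
  have := ler_wsqrtr h2; rewrite sqrtr_sqr ger0_norm ?ler0n // => hs.
  rewrite ge_min; apply/orP; left; apply: le_trans hs _.
  by rewrite -natr1; lra.
lra.
Qed.

End Dims.

End Part6.
Import Part6.

Module Part7.
Set Implicit Arguments. Unset Strict Implicit. Unset Printing Implicit Defensive.
Import Order.TTheory GRing.Theory Num.Theory.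
Local Open Scope classical_set_scope.
Local Open Scope ring_scope.

Lemma lit_al N w : (N < w)%N -> lit_internal N = al_internal w N.
Proof.
move=> Nw; apply: funext => u; rewrite /lit_internal /al_internal.
case: (ltnP (size u) N) => //= lt; symmetry.
exact: leq_ltn_trans (count_size _ _) (ltn_trans lt Nw).
Qed.

Lemma L_depth (X : Type) (H : set (X -> bool)) d T : (T <= d)%N -> L_shatterable H d -> L_shatterable H T.
Proof.
move=> le Ld.
have : AL_shatterable H d.+1 T.
  apply: ALsh_depth le _; move: Ld => [t [wf S]]; exists t; by rewrite -(lit_al (ltnSn d)).
move=> [t [wf S]]; exists t; by rewrite (lit_al (leq_ltn_trans le (ltnSn d))).
Qed.

Lemma scale8 (R : realType) (x M : \bar R) : (x <= 8%:E * M)%E -> ((1/8)%:E * x <= M)%E.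
Proof.
move=> le.
have h : (0 <= (1/8 : R)%:E)%E by rewrite lee_fin; lra.
apply: le_trans (lee_wpmul2l h le) _.
rewrite muleA -EFinM.
have -> : (1 / 8 * 8 : R) = 1 by field.
by rewrite mul1e.
Qed.

Lemma unscale8 (R : realType) (d : R) (M : \bar R) : ((d / 8)%:E <= M)%E -> (d%:E <= 8%:E * M)%E.
Proof.
move=> le.
have h : (0 <= (8 : R)%:E)%E by rewrite lee_fin; lra.
apply: le_trans _ (lee_wpmul2l h le).
rewrite -EFinM lee_fin.
have -> : (8 * (d / 8) : R) = d by field.
by [].
Qed.

Lemma fin8 (R : realType) (z : R) (x M : \bar R) : (x <= z%:E)%E -> ((z / 8)%:E <= M)%E ->
  ((1/8)%:E * x <= M)%E.
Proof.
move=> xz zM; apply: scale8; apply: le_trans (unscale8 zM).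
exact: xz.
Qed.

Lemma param_choice (R : realType) (w T : nat) : (0 < w)%N ->
  exists eps c : R, [/\ 0 <= eps, eps <= 1, 0 <= c, ((1 < w)%N -> 1 - eps <= eps * c) &
     eps * T%:R + (w.-1)%:R * c <= 2 * Num.sqrt ((w%:R - 1) * T%:R)].
Proof.
move=> w0.
have wa : (w%:R - 1 : R) = (w.-1)%:R by rewrite -{1}(prednK w0) -natr1 addrK.
rewrite wa.
case: (eqVneq w 1%N) => [->|w1].
  exists 0, 0; split => //; rewrite /= ?mul0r ?mulr0 ?addr0.
  by rewrite mulr_ge0 ?sqrtr_ge0.
have w2 : (1 < w)%N by rewrite ltn_neqAle eq_sym w1 w0.
set a := w.-1.
have a1 : (1 <= a)%N by rewrite /a -ltnS prednK.
case: (leqP T a) => Ta.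
  exists 1, 0; split => //; rewrite ?ler01 ?lexx ?mulr0 ?subrr ?addr0 ?mul1r //.
  have h : ((T%:R) ^+ 2 : R) <= a%:R * T%:R by rewrite expr2 ler_wpM2r ?ler0n // ler_nat.
  have := ler_wsqrtr h; rewrite sqrtr_sqr ger0_norm ?ler0n // => hs.
  have := sqrtr_ge0 (a%:R * T%:R : R); lra.
have T0 : (0 < T)%N by apply: leq_ltn_trans Ta.
have Tp : (0 : R) < T%:R by rewrite ltr0n.
have ap : (0 : R) < a%:R by rewrite ltr0n.
set s := Num.sqrt (a%:R * T%:R : R).
have s0 : 0 <= s := sqrtr_ge0 _.
have s2 : s ^+ 2 = a%:R * T%:R by rewrite sqr_sqrtr // mulr_ge0 ?ler0n.
have sT : s <= T%:R.
  have h : (a%:R * T%:R : R) <= T%:R ^+ 2 by rewrite expr2 ler_wpM2r ?ler0n // ler_nat ltnW.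
  by have := ler_wsqrtr h; rewrite sqrtr_sqr ger0_norm ?ler0n.
exists (s / T%:R), (s / a%:R); split.
- by rewrite divr_ge0 ?ler0n.
- by rewrite ler_pdivrMr // mul1r.
- by rewrite divr_ge0 ?ler0n.
- move=> _.
  have -> : s / T%:R * (s / a%:R) = 1.
    rewrite mulrACA -expr2 s2 -invfM [T%:R * _]mulrC divff //.
    by rewrite mulf_neq0 // gt_eqF.
  have : 0 <= s / T%:R by rewrite divr_ge0 ?ler0n.
  lra.
- rewrite divfK ?gt_eqF // mulrC divfK ?gt_eqF //; lra.
Qed.


End Part7.
Import Part7.

Unset Implicit Arguments.
Set Strict Implicit.
Local Open Scope ring_scope.
Local Open Scope ereal_scope.

Theorem theorem1 (R : realType) (X : Type) (H : set (X -> bool)) (T : nat) :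
  ((1 / 8)%:E * Order.min
      (Order.max (sqrte ((effW R H - 1%:E) * (T%:R)%:E)) (Ldim R H)) (T%:R)%:E
    <= minimax R T H)
  /\
  (forall w : nat, effW R H = (w%:R)%:E ->
     minimax R T H
       <= ALdim R H w + (2 * Num.sqrt ((w%:R - 1) * T%:R))%:E).
Proof.
split.
  apply: le_ereal_inf_tmp => _ [A vA <-].
  set M := Mworst A T H.
  have M0 : 0 <= M by apply: le_ereal_sup_tmp; exists 0; [left|].
  have Lpart : (1 / 8)%:E * Order.min (Ldim R H) (T%:R)%:E <= M.
    case: (pselect (L_shatterable H T)) => LT.
      apply: (fin8 (z := T%:R)); first by rewrite ge_min lexx orbT.
      exact: L_engine vA LT (leqnn T).
    apply: scale8.
    have LM : Ldim R H <= 8%:E * M.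
      apply: ge_ereal_sup => y [->|[d Ld <-]].
        by apply: mule_ge0 => //; rewrite lee_fin; lra.
      have dT : (d <= T)%N.
        by rewrite leqNgt; apply/negP => lt; apply: LT; apply: L_depth (ltnW lt) Ld.
      by apply: unscale8; exact: L_engine vA Ld dT.
    by rewrite ge_min LM.
  have Wpart : (1 / 8)%:E * Order.min (sqrte ((effW R H - 1%:E) * (T%:R)%:E)) (T%:R)%:E <= M.
    case: (posnP T) => [T0|T0].
      apply: (fin8 (z := 0)); first by rewrite T0 ge_min lexx orbT.
      by rewrite mul0r.
    have [[eW allinf]|[w0 [eW [w00 [fin minw]]]]] := effW_cases R H.
      rewrite eW /= gt0_mulye ?lte_fin ?ltr0n //=.
      have := k_engine vA T0 T0 (ALdim_inf (allinf T T0)).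
      rewrite -expr2 sqrtr_sqr ger0_norm ?ler0n // minxx => hk.
      by apply: (fin8 (z := T%:R)) => //; rewrite ge_min lexx orbT.
    rewrite eW -EFinB -EFinM /=.
    case: (eqVneq w0 1%N) => [w1|w1].
      apply: (fin8 (z := 0)); last by rewrite mul0r.
      by rewrite ge_min w1 subrr mul0r sqrtr0 lexx.
    have k0 : (0 < w0.-1)%N by rewrite -ltnS prednK // ltn_neqAle eq_sym w1 w00.
    have kw : (w0.-1 < w0)%N by rewrite prednK.
    have := k_engine vA k0 T0 (ALdim_inf (minw _ k0 kw)).
    have wa : (w0%:R - 1 = (w0.-1)%:R :> R)%R by rewrite -{1}(prednK w00) -natr1 addrK.
    rewrite -wa => hk.
    apply: (fin8 _ hk).
    by rewrite -EFin_min.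
  case/orP: (le_total (sqrte ((effW R H - 1%:E) * (T%:R)%:E)) (Ldim R H)) => h.
    by rewrite (max_r h).
  by rewrite (max_l h).
move=> w eW.
have [[eW' _]|[w0 [eW' [w00 [fin _]]]]] := effW_cases R H.
  by rewrite eW in eW'.
have ww : w = w0.
  move: eW'; rewrite eW => -[] /eqP; rewrite eqr_nat => /eqP.
  done.
subst w0.
have b := ALdim_fin fin.
have RHS0 : 0 <= ALdim R H w + (2 * Num.sqrt ((w%:R - 1) * T%:R))%:E.
  apply: adde_ge0; first exact: ALdim_ge0.
  by rewrite lee_fin mulr_ge0 ?sqrtr_ge0.
have [eps [c [e0 e1 c0 ec bd]]] := param_choice R T w00.
have vl : valid_learner (lrn H w eps) by apply: lrn_valid.
apply: (le_trans (y := Mworst (lrn H w eps) T H)).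
  by apply: ge_ereal_inf; exists (Mworst (lrn H w eps) T H) => //; exists (lrn H w eps).
case: (pselect (exists h, H h)) => [ne|emp].
  apply: le_trans (upper_M T e0 e1 c0 ec w00 b) _.
  rewrite -addrA EFinD; apply: leeD; first exact: dim_le_ALdim.
  by rewrite lee_fin.
apply: le_trans RHS0.
apply: ge_ereal_sup => y [->|[h [xs [Hh _]]]] //.
by exfalso; apply: emp; exists h.
Qed.
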